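(* Let $H=(V,E)$ be an uncapacitated hypergraph, let $v_1,\ldots,v_n$ be an MA-ordering of $H$, fix a head ordering of the edges, let $k\ge0$ be an integer, and let $H_k$ be the hypergraph obtained from $H$ via this ordering as described in the context. Then $v_1,\ldots,v_n$ is an MA-ordering of $H_k$.
   Context: A hypergraph $H=(V,E)$ has finite vertex set $V$ and a finite multiset $E$ of edges (subsets of $V$), each with capacity $1$. For subsets $A_1,\ldots,A_k$, $d(A_1,\ldots,A_k)$ is the number of edges meeting every $A_i$ (a vertex $v$ stands for $\{v\}$). For an ordering $v_1,\ldots,v_n$, $V_i=\{v_1,\ldots,v_i\}$ ($V_0=\emptyset$); it is an MA-ordering if $d(V_{i-1},v_i)\ge d(V_{i-1},v_j)$ for all $1\le i<j\le n$. The head $h(e)$ of an edge is its vertex of smallest index; a head ordering of the edges is one in which the index of the head is non-decreasing; $e$ is a backward edge of $v$ if $v\in e$ and $h(e)\ne v$; $D_k(v)$ is the set of the first $k$ backward edges of $v$ in the head ordering (all of them if fewer than $k$). For $e\in E$ let $e'=\{v\in e: e\in D_k(v)\}\cup\{h(e)\}$, and $H_k=(V,E_k)$ where $E_k$ is the multiset $\{e' : e\in E, |e'|\ge2\}$. *)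

(* Defs.v *)
From mathcomp Require Import all_boot.
Set Implicit Arguments. Unset Strict Implicit. Unset Printing Implicit Defensive.

(* A hypergraph on a finite vertex type V: the edge multiset is a sequence
   E : seq {set V} (each occurrence is one edge of capacity 1; the order of
   the sequence is the fixed (head) ordering of the edges).
   An ordering v_1..v_n of V is a duplicate-free sequence s containing every
   vertex; vertex v has (0-based) index [index v s]. *)

Section Hyp.
Variable V : finType.

Definition is_vertex_ordering (s : seq V) : Prop := uniq s /\ forall v : V, v \in s.

Definition prefix_set (s : seq V) (i : nat) : {set V} := [set x in take i s].

Definition dAv (E : seq {set V}) (A : {set V}) (v : V) : nat :=
  count (fun e => (e :&: A != set0) && (v \in e)) E.

(* MA-ordering: d(V_{i-1}, v_i) >= d(V_{i-1}, v_j) for all i < j.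
   (stated over vertices u = v_i, w = v_j, using that s lists all vertices) *)
Definition MA_ordering (s : seq V) (E : seq {set V}) : Prop :=
  forall u w : V, index u s < index w s ->
    dAv E (prefix_set s (index u s)) w <= dAv E (prefix_set s (index u s)) u.

(* the head of e, as a set: {h(e)} if e is nonempty, set0 otherwise *)
Definition head_set (s : seq V) (e : {set V}) : {set V} :=
  [set v in e | [forall y in e, index v s <= index y s]].

Definition head_ordering (s : seq V) (E : seq {set V}) : Prop :=
  forall p q : nat, forall v w : V, p < q < size E ->
    v \in head_set s (nth set0 E p) -> w \in head_set s (nth set0 E q) ->
    index v s <= index w s.

Definition backward (s : seq V) (e : {set V}) (v : V) : bool :=
  (v \in e) && (v \notin head_set s e).

Definition in_Dk (k : nat) (s : seq V) (E : seq {set V}) (v : V) (p : nat) : bool :=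
  backward s (nth set0 E p) v &&
  (count (fun q => backward s (nth set0 E q) v) (iota 0 p) < k).

Definition reduced_edge (k : nat) (s : seq V) (E : seq {set V}) (p : nat) : {set V} :=
  [set v in nth set0 E p | in_Dk k s E v p] :|: head_set s (nth set0 E p).

Definition Hk_edges (k : nat) (s : seq V) (E : seq {set V}) : seq {set V} :=
  [seq reduced_edge k s E p | p <- iota 0 (size E) & 1 < #|reduced_edge k s E p|].

End Hyp.

(* Main.v *)
Require Import Defs.
From mathcomp Require Import all_boot.
From mathcomp Require Import zify.

Lemma count_min (B : pred nat) k n :
  count (fun p => B p && (count B (iota 0 p) < k)) (iota 0 n)
  = minn k (count B (iota 0 n)).
Proof.
elim: n => [|n IH]; first by rewrite minn0.
rewrite -addn1 iotaD !count_cat IH /= add0n !addn0.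
case: (B n) => /=; last lia.
case: ltnP => h /=; lia.
Qed.

Lemma head_in {V : finType} {s : seq V} {e h} : h \in head_set s e -> h \in e.
Proof. by rewrite inE => /andP[]. Qed.

Lemma head_min {V : finType} {s : seq V} {e h y} :
  h \in head_set s e -> y \in e -> index h s <= index y s.
Proof. by rewrite inE => /andP[_ /forallP H] ye; have := H y; rewrite ye. Qed.

Lemma head_exists {V : finType} {s : seq V} {e : {set V}} {y} : y \in e ->
  exists h, h \in head_set s e /\ index h s <= index y s.
Proof.
move=> ye.
case: (@arg_minnP V y (fun v => v \in e) (fun v => index v s) ye) => h hin hmin.
exists h; split; last exact: hmin.
rewrite inE hin /=; apply/forallP => z; apply/implyP => zin; exact: hmin.
Qed.

Theorem mainTheorem13 (V : finType) (E : seq {set V}) (s : seq V) (k : nat) :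
  is_vertex_ordering s -> MA_ordering s E -> head_ordering s E ->
  MA_ordering s (Hk_edges k s E).
Proof.
move=> [Hu Hs] HMA Hho u w Huw.
set i := index u s. set A := prefix_set s i.
have memA x : (x \in A) = (index x s < i) by rewrite /A /prefix_set inE in_take.
pose meets p := (nth set0 E p :&: A != set0).
pose B x p := backward s (nth set0 E p) x && meets p.
have notHead e x : i <= index x s -> e :&: A != set0 -> x \notin head_set s e.
  move=> hx /set0Pn [y]; rewrite inE memA => /andP[ye yA].
  apply/negP => hh; have := head_min hh ye; lia.
have K2 x : i <= index x s -> dAv E A x = count (B x) (iota 0 (size E)).
  move=> hx; rewrite /dAv -{1}(mkseq_nth set0 E) /mkseq count_map.
  apply: eq_in_count => p _ /=; rewrite /B /backward /meets.
  apply/idP/idP => [/andP[m xe]|/andP[/andP[xe _] m]]; by rewrite ?m ?xe ?notHead.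
have K1 x : i <= index x s -> dAv (Hk_edges k s E) A x =
    count (fun p => B x p && (count (B x) (iota 0 p) < k)) (iota 0 (size E)).
  move=> hx; rewrite /dAv /Hk_edges count_map count_filter.
  apply: eq_in_count => p; rewrite mem_iota => /andP[_ pn] /=.
  set e := nth set0 E p.
  have mem' v : v \in reduced_edge k s E p = ((v \in e) && in_Dk k s E v p) || (v \in head_set s e).
    by rewrite /reduced_edge !inE.
  have Dke v : in_Dk k s E v p -> v \in e by rewrite /in_Dk /backward => /andP[/andP[]].
  rewrite /B -/e.
  case M: (meets p); last first.
    rewrite !andbF; apply/negbTE/negP => /andP[/andP[/set0Pn [y] + _] _].
    rewrite inE mem' => /andP[/orP[/andP[ye _]|/head_in ye] yA];
      move/negbT: M; rewrite /meets -/e => /negP; apply; apply/set0Pn; exists y;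
      by rewrite inE ye yA.
  rewrite andbT.
  have M' := M; rewrite /meets -/e in M'.
  case/set0Pn: (M') => y; rewrite inE memA => /andP[ye yA].
  have [h [hh hy]] := head_exists (s:=s) ye.
  have hA : h \in A by rewrite memA; lia.
  have -> : reduced_edge k s E p :&: A != set0.
    by apply/set0Pn; exists h; rewrite inE mem' hh orbT hA.
  have -> : (x \in reduced_edge k s E p) = in_Dk k s E x p.
    rewrite mem' (negbTE (notHead e x hx M')) orbF.
    by apply/idP/idP => [/andP[]//|D]; rewrite D Dke.
  have big : in_Dk k s E x p -> 1 < #|reduced_edge k s E p|.
    move=> D; apply/card_gt1P; exists x, h; split.
    - by rewrite mem' D Dke.
    - by rewrite mem' hh orbT.
    - apply/negP => /eqP xh; rewrite xh in hx; lia.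
  have Hc : count (fun q => backward s (nth set0 E q) x) (iota 0 p)
          = count (B x) (iota 0 p).
    apply: eq_in_count => r; rewrite mem_iota => /andP[_ rp] /=.
    rewrite /B; case Bk: (backward _ _ _) => //=.
    move: Bk; rewrite /backward => /andP[xr _].
    have [hr [hrh _]] := head_exists (s:=s) xr.
    have := Hho r p hr h; rewrite rp pn => /(_ isT hrh hh) hle.
    apply/esym/set0Pn; exists hr; rewrite inE (head_in hrh) memA; lia.
  have -> : in_Dk k s E x p = backward s e x && (count (B x) (iota 0 p) < k).
    by rewrite /in_Dk Hc.
  case D: (backward s e x && _) => //.
  by rewrite big // /in_Dk Hc.
rewrite (K1 w (ltnW Huw)) (K1 u (leqnn _)) !count_min -(K2 w (ltnW Huw)) -(K2 u (leqnn _)).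
have := HMA u w Huw; rewrite -/i -/A; lia.
Qed.
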